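(* For every integer $d\ge 4$, there exist states $|\mu\rangle,|\lambda\rangle,|\bar\mu\rangle,|\bar\lambda\rangle\in\mathbb{C}^d\otimes\mathbb{C}^d$, all of full Schmidt rank $d$, with the following properties: (a) $|\mu\rangle\otimes|\lambda\rangle$ can be transformed into $|\bar\mu\rangle\otimes|\bar\lambda\rangle$ by a local unitary; (b) the transformation is non-trivial: it is not the case that ($|\bar\mu\rangle$ is LU-equivalent to $|\mu\rangle$ and $|\bar\lambda\rangle$ is LU-equivalent to $|\lambda\rangle$), and it is not the case that ($|\bar\mu\rangle$ is LU-equivalent to $|\lambda\rangle$ and $|\bar\lambda\rangle$ is LU-equivalent to $|\mu\rangle$).
   Context: The state $|\mu\rangle\otimes|\lambda\rangle$ is regarded as a bipartite state between two parties, each holding two $d$-dimensional subsystems. A local unitary is $U_A\otimes U_B$ with $U_A,U_B\in\mathrm{U}(d^2)$. Two bipartite states are LU-equivalent if they are related by a local unitary, equivalently if they have the same squared Schmidt coefficients up to reordering. *)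

(* Defs.v *)
(* Complex numbers C := complex R over Stdlib's reals R
   (an rcfType via Rstruct); bipartite pure states of C^m (x) C^n are
   represented by their m x n coefficient matrices. *)
From HB Require Import structures.
From mathcomp Require Import all_boot all_order all_algebra.
From mathcomp Require Import complex mxtens.
From mathcomp Require Import Rstruct.
Set Implicit Arguments. Unset Strict Implicit. Unset Printing Implicit Defensive.
Import Order.TTheory GRing.Theory Num.Theory.
Local Open Scope ring_scope.

Definition C : numClosedFieldType := (Rdefinitions.R)[i].

Definition adjmx {F : numClosedFieldType} {m n} (A : 'M[F]_(m, n)) : 'M[F]_(n, m) :=
  (map_mx Num.conj A)^T.

Definition unitary {F : numClosedFieldType} {n} (U : 'M[F]_n) : Prop :=
  U *m adjmx U = 1%:M.

(* A (normalized) state in C^m (x) C^n, given by its coefficient matrix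
   psi = sum_{ij} M i j |i>|j>. *)
Definition is_state {m n} (M : 'M[C]_(m, n)) : Prop :=
  \sum_(i < m) \sum_(j < n) `|M i j| ^+ 2 = 1.

Definition schmidt_rank {m n} (M : 'M[C]_(m, n)) : nat := \rank M.

(* Local-unitary equivalence: (U_A (x) U_B) psi = phi, i.e. U_A M U_B^T = N. *)
Definition LU_equiv {m n} (M N : 'M[C]_(m, n)) : Prop :=
  exists (UA : 'M[C]_m) (UB : 'M[C]_n),
    unitary UA /\ unitary UB /\ N = UA *m M *m UB^T.

(* |mu> (x) |lambda> viewed as a bipartite state between party A (holding the
   first subsystems of both) and party B (holding the second ones):
   coefficient matrix is the Kronecker product of the coefficient matrices. *)
Definition tens_state {d} (mu lam : 'M[C]_d) : 'M[C]_(d * d) := tensmx mu lam.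

(* Main.v *)
Require Import Defs.
From HB Require Import structures.
From mathcomp Require Import all_boot all_order all_algebra.
From mathcomp Require Import complex mxtens.
From mathcomp Require Import Rstruct.
From mathcomp Require Import perm.
From mathcomp Require Import ring zify.
Set Implicit Arguments. Unset Strict Implicit. Unset Printing Implicit Defensive.
Import Order.TTheory GRing.Theory Num.Theory.
Local Open Scope ring_scope.

Lemma count_sum_ord N (f : 'I_N -> nat) (v : nat) :
  ((\sum_(k < N) 'X^(f k) : {poly int})`_v = (count_mem v (map f (enum 'I_N)))%:R).
Proof.
rewrite coef_sum count_map -sum1_count big_enum_cond natr_sum.
rewrite [RHS]big_mkcond /=; apply: eq_bigr => k _.
by rewrite coefXn eq_sym; case: (f k == v).
Qed.

Lemma poly_perm N (f g : 'I_N -> nat) :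
  (\sum_(k < N) 'X^(f k) : {poly int}) = \sum_(k < N) 'X^(g k) ->
  exists s : 'S_N, forall k, g k = f (s k).
Proof.
move=> E.
have P : perm_eq (map g (enum 'I_N)) [tuple f i | i < N].
  apply/allP => v _; apply/eqP.
  have := congr1 (fun p : {poly int} => p`_v) E.
  rewrite /= !count_sum_ord => /eqP; rewrite eqr_nat => /eqP ->.
  by rewrite /= enumT /ord_tuple /= -enumT.
case/tuple_permP: P => s Es; exists s => k.
have := congr1 (fun q => nth 0%N q k) Es.
rewrite /= (nth_map k) ?size_enum_ord // nth_ord_enum.
by rewrite (nth_map k) ?size_enum_ord // nth_ord_enum tnth_mktuple.
Qed.
Lemma perm_unitary n (s : 'S_n) : unitary (perm_mx s : 'M[C]_n).
Proof.
rewrite /unitary /adjmx map_perm_mx tr_perm_mx -perm_mxM mulgV perm_mx1 //.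
Qed.

Lemma diag_perm_LU n (D : 'I_n -> C) (s : 'S_n) :
  LU_equiv (diag_mx (\row_i D i)) (diag_mx (\row_i D (s i))).
Proof.
exists (perm_mx s), (perm_mx s); split; first exact: perm_unitary.
split; first exact: perm_unitary.
rewrite -row_permE tr_perm_mx.
have -> : perm_mx s^-1 = perm_mx (s^-1)^-1^-1 :> 'M[C]_n by rewrite invgK.
rewrite -col_permE.
apply/matrixP => i j; rewrite !mxE invgK (inj_eq perm_inj).
by [].
Qed.
Lemma adjmxM m n p (A : 'M[C]_(m, n)) (B : 'M[C]_(n, p)) :
  adjmx (A *m B) = adjmx B *m adjmx A.
Proof. by rewrite /adjmx map_mxM trmx_mul. Qed.

Lemma adjmxT m n (A : 'M[C]_(m, n)) : adjmx (A^T) = (adjmx A)^T.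
Proof. by rewrite /adjmx -map_trmx. Qed.

Lemma LU_det m (M N : 'M[C]_m) (l : C) : LU_equiv M N ->
  \det (N *m adjmx N - l%:M) = \det (M *m adjmx M - l%:M).
Proof.
case=> [UA [UB [hA [hB ->]]]].
have hB' : adjmx UB *m UB = 1%:M by apply: mulmx1C.
have e1 : UB^T *m adjmx UB^T = 1%:M by rewrite adjmxT -trmx_mul hB' trmx1.
have -> : UA *m M *m UB^T *m adjmx (UA *m M *m UB^T) - l%:M
   = UA *m (M *m adjmx M - l%:M) *m adjmx UA.
  rewrite !adjmxM !mulmxA -[UA *m M *m UB^T *m adjmx UB^T]mulmxA e1 mulmx1.
  rewrite mulmxBr mulmxBl !mulmxA mul_mx_scalar -scalemxAl hA scalemx1.
  by rewrite -!mulmxA.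
by rewrite !det_mulmx mulrAC -det_mulmx hA det1 mul1r.
Qed.
Definition esum (R : pzSemiRingType) (x : R) (e : nat -> nat) (m : nat) :=
  \sum_(i < m) x ^+ e i.

Definition emu (i : nat) : nat := if (i < 2)%N then i else (i - 2)%N.
Definition elam (d i : nat) : nat := if i == 1%N then d.+1 else i.
Definition emub (d i : nat) : nat :=
  if i == 0%N then 0%N else if i == 1%N then 3%N else if i == 3%N then d.-1 else (i - 2)%N.
Definition elamb (i : nat) : nat := i.

Lemma esum2 (R : pzSemiRingType) (x : R) e m :
  esum x e m.+2 = x ^+ e 0%N + x ^+ e 1%N + esum x (fun i => e i.+2) m.
Proof. by rewrite /esum !big_ord_recl /= addrA. Qed.

Lemma esum_shift (R : pzSemiRingType) (x : R) e m k :
  esum x (fun i => e i + k)%N m = x ^+ k * esum x e m.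
Proof.
rewrite /esum mulr_sumr; apply: eq_bigr => i _.
by rewrite addnC exprD.
Qed.

Lemma esum_ext (R : pzSemiRingType) (x : R) e e' m :
  (forall i, e i = e' i) -> esum x e m = esum x e' m.
Proof. by move=> h; apply: eq_bigr => i _; rewrite h. Qed.

Lemma key (R : comPzRingType) (x : R) n :
  esum x emu n.+4 * esum x (elam n.+4) n.+4 =
  esum x (emub n.+4) n.+4 * esum x elamb n.+4.
Proof.
set g := esum x elamb n.
have hp : x ^+ n = (x - 1) * g + 1 by rewrite -subrX1 subrK.
have G2 : forall m, esum x elamb m.+2 = 1 + x + x ^+ 2 * esum x elamb m.
  move=> m; rewrite esum2 -esum_shift /elamb expr0 expr1; congr (_ + _).
  by apply: esum_ext => i; rewrite addn2.
have Emu : esum x emu n.+4 = 1 + x + esum x elamb n.+2.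
  rewrite esum2 /emu /= expr0 expr1; congr (_ + _).
  by apply: esum_ext => i; rewrite /elamb subn2.
have Elam : esum x (elam n.+4) n.+4 = 1 + x ^+ (n.+4).+1 + x ^+ 2 * esum x elamb n.+2.
  rewrite esum2 /elam /= expr0 -esum_shift; congr (_ + _).
  by apply: esum_ext => i; rewrite /elamb addn2.
have Emub : esum x (emub n.+4) n.+4 = 1 + x ^+ 3 + (1 + x ^+ n.+3 + x ^+ 2 * g).
  rewrite esum2 esum2 /emub /= expr0 -esum_shift; congr (_ + (_ + _)).
  by apply: esum_ext => i; rewrite /elamb /= subn2 addn2.
rewrite Emu Elam Emub !G2; fold g.
have -> : x ^+ (n.+4).+1 = x ^+ 5 * x ^+ n by rewrite -exprD; congr (x ^+ _); rewrite addnC.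
have -> : x ^+ n.+3 = x ^+ 3 * x ^+ n by rewrite -exprD; congr (x ^+ _); rewrite addnC.
rewrite hp; ring.
Qed.


Definition nrm (e : nat -> nat) (d : nat) : C := esum (4 : C) e d.
Definition cst (e : nat -> nat) (d : nat) : C := (sqrtC (nrm e d))^-1.
Definition st (e : nat -> nat) (d : nat) : 'M[C]_d :=
  diag_mx (\row_(i < d) (cst e d * 2 ^+ e i)).

Lemma nrm_nat e d : nrm e d = (\sum_(i < d) 4 ^ e i)%N%:R.
Proof. by rewrite /nrm /esum natr_sum; apply: eq_bigr => i _; rewrite natrX. Qed.

Lemma nrm_gt0 e n : 0 < nrm e n.+1.
Proof. by rewrite nrm_nat ltr0n big_ord_recl addn_gt0 expn_gt0. Qed.

Lemma nrm_neq0 e n : nrm e n.+1 != 0.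
Proof. by rewrite gt_eqF ?nrm_gt0. Qed.

Lemma cst_ge0 e d : 0 <= cst e d.
Proof.
rewrite invr_ge0 sqrtC_ge0 nrm_nat; exact: ler0n.
Qed.

Lemma sq_entry e d (i : nat) :
  `|cst e d * 2 ^+ e i| ^+ 2 = (nrm e d)^-1 * 4 ^+ e i.
Proof.
rewrite normrM exprMn ger0_norm ?cst_ge0 // /cst exprVn sqrtCK.
rewrite normrX normr_nat -exprM mulnC exprM.
by rewrite expr2 -natrM.
Qed.

Lemma st_state e n : is_state (st e n.+1).
Proof.
rewrite /is_state.
transitivity (\sum_(i < n.+1) (nrm e n.+1)^-1 * 4 ^+ e i).
  apply: eq_bigr => i _; rewrite (bigD1 i) //= big1 ?addr0.
    by rewrite !mxE eqxx mulr1n sq_entry.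
  by move=> j /negbTE nij; rewrite !mxE eq_sym nij mulr0n normr0 expr0n.
by rewrite -mulr_sumr mulVf ?nrm_neq0.
Qed.

Lemma entry_neq0 e n (i : nat) : cst e n.+1 * 2 ^+ e i != 0.
Proof.
rewrite mulf_neq0 // ?expf_neq0 ?pnatr_eq0 //.
by rewrite invr_eq0 sqrtC_eq0 nrm_neq0.
Qed.

Lemma st_rank e n : schmidt_rank (st e n.+1) = n.+1.
Proof.
rewrite /schmidt_rank mxrank_unit // unitmxE det_diag unitfE.
by apply/prodf_neq0 => i _; rewrite mxE entry_neq0.
Qed.

Lemma st_MMadj e d :
  st e d *m adjmx (st e d) = diag_mx (\row_(i < d) ((nrm e d)^-1 * 4 ^+ e i)).
Proof.
rewrite /adjmx /st map_diag_mx tr_diag_mx mulmx_diag; congr diag_mx.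
by apply/rowP => i; rewrite !mxE -normCK sq_entry.
Qed.

Lemma st_det e d (l : C) :
  \det (st e d *m adjmx (st e d) - l%:M) =
  \prod_(i < d) ((nrm e d)^-1 * 4 ^+ e i - l).
Proof.
rewrite st_MMadj -diag_const_mx -linearB det_diag /=.
by apply: eq_bigr => i _; rewrite !mxE.
Qed.

Lemma pow4_inj (m k : nat) : (4 ^+ m : C) = 4 ^+ k -> m = k.
Proof.
move=> /eqP; rewrite -!natrX eqr_nat eqn_exp2l //; exact/eqP.
Qed.

Lemma spec_transfer e e' n (H : forall l, \det (st e n.+1 *m adjmx (st e n.+1) - l%:M)
     = \det (st e' n.+1 *m adjmx (st e' n.+1) - l%:M)) (i : 'I_n.+1) :
  exists j : 'I_n.+1, (nrm e n.+1)^-1 * 4 ^+ e i = (nrm e' n.+1)^-1 * 4 ^+ e' j.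
Proof.
have : \det (st e n.+1 *m adjmx (st e n.+1) - ((nrm e n.+1)^-1 * 4 ^+ e i)%:M) == 0.
  by rewrite st_det; apply/prodf_eq0; exists i => //; rewrite subrr.
rewrite H st_det => /prodf_eq0 [j _]; rewrite subr_eq0 => /eqP hj; exists j; by rewrite hj.
Qed.


Lemma ab_eq (a b : C) (x y : nat) : a != 0 -> a = b * 4 ^+ x -> b = a * 4 ^+ y -> a = b.
Proof.
move=> an0 ha hb.
have h1 : a * 1 = a * (4 : C) ^+ (y + x) by rewrite mulr1 exprD mulrA -hb -ha.
have h2 : (4 : C) ^+ (y + x) = 4 ^+ 0 by rewrite expr0; exact: esym (mulfI an0 h1).
move: (pow4_inj h2) => /eqP; rewrite addn_eq0 => /andP [_ /eqP hx].
by rewrite ha hx expr0 mulr1.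
Qed.

Lemma noLU (e e' : nat -> nat) n (i0 j0 i1 : 'I_n.+1) : e i0 = 0%N -> e' j0 = 0%N ->
  (forall j : 'I_n.+1, e' j != e i1) ->
  ~ LU_equiv (st e n.+1) (st e' n.+1) /\ ~ LU_equiv (st e' n.+1) (st e n.+1).
Proof.
move=> h0 h0' hne.
suff K : ~ (forall l : C, \det (st e n.+1 *m adjmx (st e n.+1) - l%:M)
     = \det (st e' n.+1 *m adjmx (st e' n.+1) - l%:M)).
  split => hLU; apply: K => l.
    exact: (esym (LU_det l hLU)).
  exact: (LU_det l hLU).
move=> H.
have H' : forall l : C, \det (st e' n.+1 *m adjmx (st e' n.+1) - l%:M)
     = \det (st e n.+1 *m adjmx (st e n.+1) - l%:M) by move=> l; exact: esym (H l).
have an0 : (nrm e n.+1)^-1 != 0 by rewrite invr_eq0 nrm_neq0.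
have [j hj] := spec_transfer H i0.
have [i hi] := spec_transfer H' j0.
rewrite h0 expr0 mulr1 in hj; rewrite h0' expr0 mulr1 in hi.
have ab := ab_eq an0 hj hi.
have [j1 hj1] := spec_transfer H i1.
move: hj1; rewrite -ab => /(mulfI an0) /pow4_inj hh.
by move: (hne j1); rewrite hh eqxx.
Qed.

Lemma tens_st a b d : tens_state (st a d) (st b d) =
  diag_mx (\row_(k < d * d) (cst a d * cst b d *
     2 ^+ (a (mxtens_unindex k).1 + b (mxtens_unindex k).2))).
Proof.
apply/matrixP => k l.
rewrite -[k]mxtens_unindexK -[l]mxtens_unindexK.
case: (mxtens_unindex k) => i j; case: (mxtens_unindex l) => i' j'.
rewrite /tens_state /st tensmxE !mxE mxtens_indexK /=.
rewrite (inj_eq (can_inj (@mxtens_indexK d d))) xpair_eqE.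
case: (i =P i') => [->|_]; case: (j =P j') => [->|_] /=;
  rewrite ?mulr1n ?mulr0n ?mulr0 ?mul0r //.
by rewrite exprD mulrACA.
Qed.

Lemma cst_prod a b a' b' d :
  nrm a d * nrm b d = nrm a' d * nrm b' d ->
  cst a d * cst b d = cst a' d * cst b' d.
Proof.
move=> h; rewrite /cst -!invfM.
have nn : forall e, nrm e d \is Num.nneg by move=> e; rewrite nnegrE nrm_nat ler0n.
by rewrite -!sqrtCM ?nn // h.
Qed.

Theorem mainTheorem10 (d : nat) (hd : (4 <= d)%N) :
  exists mu lam mub lamb : 'M[C]_d,
    [/\ is_state mu, is_state lam, is_state mub & is_state lamb] /\
    [/\ schmidt_rank mu = d, schmidt_rank lam = d,
        schmidt_rank mub = d & schmidt_rank lamb = d] /\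
    LU_equiv (tens_state mu lam) (tens_state mub lamb) /\
    ~ (LU_equiv mu mub /\ LU_equiv lam lamb) /\
    ~ (LU_equiv lam mub /\ LU_equiv mu lamb).
Proof.
have [n ->] : exists n, d = n.+4 by exists (d - 4)%N; rewrite -addn4 subnK.
exists (st emu n.+4), (st (elam n.+4) n.+4), (st (emub n.+4) n.+4), (st elamb n.+4).
split; first by split; apply: st_state.
split; first by split; apply: st_rank.
split.
  rewrite !tens_st.
  set f := fun k : 'I_(n.+4 * n.+4) =>
    (emu (mxtens_unindex k).1 + elam n.+4 (mxtens_unindex k).2)%N.
  set g := fun k : 'I_(n.+4 * n.+4) =>
    (emub n.+4 (mxtens_unindex k).1 + elamb (mxtens_unindex k).2)%N.
  have hp : (\sum_(k < n.+4 * n.+4) 'X^(f k) : {poly int}) = \sum_(k < n.+4 * n.+4) 'X^(g k).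
    have E1 := key ('X : {poly int}) n.
    rewrite /esum !mulr_sum in E1.
    rewrite /f /g; under eq_bigr do rewrite exprD.
    by under [RHS]eq_bigr do rewrite exprD.
  have [s hs] := poly_perm hp.
  have hc : cst (emub n.+4) n.+4 * cst elamb n.+4 = cst emu n.+4 * cst (elam n.+4) n.+4.
    by apply: cst_prod; rewrite /nrm (key (4 : C) n).
  rewrite hc.
  have -> : \row_(k < n.+4 * n.+4) (cst emu n.+4 * cst (elam n.+4) n.+4 *
     2 ^+ (emub n.+4 (mxtens_unindex k).1 + elamb (mxtens_unindex k).2))
    = \row_(k < n.+4 * n.+4) (cst emu n.+4 * cst (elam n.+4) n.+4 * 2 ^+ f (s k)).
    by apply/rowP => k; rewrite !mxE -hs.
  exact: (diag_perm_LU (fun k => cst emu n.+4 * cst (elam n.+4) n.+4 * 2 ^+ f k) s).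
have i0 : (0 < n.+4)%N by [].
have i1 : (1 < n.+4)%N by [].
have i3 : (3 < n.+4)%N by [].
have ne1 : forall j : 'I_n.+4, emu j != emub n.+4 (Ordinal i3).
  move=> [j hj] /=; rewrite /emu /emub /=.
  case: ltnP => hj2; apply/eqP; lia.
have ne2 : forall j : 'I_n.+4, emub n.+4 j != elam n.+4 (Ordinal i1).
  move=> [j hj] /=; rewrite /emub /elam /=.
  case: (j =P 0%N) => ?; [|case: (j =P 1%N) => ?; [|case: (j =P 3%N) => ?]]; apply/eqP; lia.
split.
  case=> h _.
  have [_ K] := @noLU (emub n.+4) emu n.+3 (Ordinal i0) (Ordinal i0) (Ordinal i3)
    erefl erefl ne1.
  exact: K.
case=> h _.
have [K _] := @noLU (elam n.+4) (emub n.+4) n.+3 (Ordinal i0) (Ordinal i0) (Ordinal i1)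
  erefl erefl ne2.
exact: K.
Qed.
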